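(* Let $n\in\mathbb N$, $\Lambda_n=\{0,\frac{1}{n}\pi,\dots,\frac{n-1}{n}\pi\}$, let $\underline\mu:\Lambda_n\to\mathbb N_0$ be any multiplicity function, $A=A(\Lambda_n,\underline\mu)$, $m=\max\{\mu_\alpha:\alpha\in\Lambda_n\}$, $\underline\kappa$ the constant function with value $m$ on $\Lambda_n$, $C=A(\Lambda_n,\underline\kappa)$, and $\Omega:=\operatorname{Hom}_C(A,C)$. Put $\nu_\alpha=m-\mu_\alpha$ for $\alpha\in\Lambda_n$. Then $\Omega\cong\{f\in C:\ f^{(0)}_\alpha=f^{(2)}_\alpha=\dots=f^{(2(\nu_\alpha-1))}_\alpha=0\ \text{for all }\alpha\in\Lambda_n\}$.
   Context: $R=\mathbb C[z_1,z_2]$; for a finite $\Pi\subset\mathbb C$ with pairwise differences not in $\pi\mathbb Z$ and $\underline\mu:\Pi\to\mathbb N_0$, $A(\Pi,\underline\mu)=\{f\in R:l_\alpha^{2\mu_\alpha+1}\mid f-s_\alpha(f)\ \forall\alpha\in\Pi\}$, where $l_\alpha=-\sin(\alpha)z_1+\cos(\alpha)z_2$ and $s_\alpha$ is the involution of $R$ induced by the reflection of $\mathbb C^2$ fixing $\{l_\alpha=0\}$. Polar coordinates $z_1=\rho\cos\varphi$, $z_2=\rho\sin\varphi$; $f^{(k)}_\alpha=\partial^k f/\partial\varphi^k|_{\varphi=\alpha}\in\mathbb C[\rho]$. (The conditions for $\alpha$ with $\nu_\alpha=0$ are empty.) *)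

(* Defs.v *)
From Stdlib Require Import Reals.
From HB Require Import structures.
From mathcomp Require Import all_boot all_order all_algebra.
From mathcomp Require Import Rstruct.
From mathcomp Require Import complex.
From mathcomp Require Import mpoly.

Set Implicit Arguments.
Unset Strict Implicit.
Unset Printing Implicit Defensive.

Import Order.TTheory GRing.Theory Num.Theory.
Local Open Scope ring_scope.

Notation CC := (complex R).

Definition cr (r : R) : CC := Complex r 0%R.

(* R = C[z1, z2]; z1 = 'X_0, z2 = 'X_1. *)
Notation Rpoly := {mpoly CC[2]}.

Definition z1 : Rpoly := 'X_(@Ordinal 2 0 isT).
Definition z2 : Rpoly := 'X_(@Ordinal 2 1 isT).

Definition lin (a : R) : Rpoly :=
  (cr (- sin a))%:MP * z1 + (cr (cos a))%:MP * z2.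

(* s_alpha : the involution of R induced by the reflection of C^2 fixing the
   line {l_alpha = 0} = C (cos a, sin a); its matrix is
   [[cos 2a, sin 2a], [sin 2a, - cos 2a]], and (s_alpha f)(z) = f(s_alpha z). *)
Definition refl (a : R) (f : Rpoly) : Rpoly :=
  comp_mpoly [tuple (cr (cos (2 * a)))%:MP * z1 + (cr (sin (2 * a)))%:MP * z2;
                    (cr (sin (2 * a)))%:MP * z1 - (cr (cos (2 * a)))%:MP * z2] f.

(* A(Pi, mu) = { f in R : l_alpha^(2 mu_alpha + 1) | f - s_alpha(f) for all alpha in Pi }.
   Pi is given as a finite list of angles; mu as a function on angles
   (only its values on Pi matter). *)
Definition inA (Pi : seq R) (mu : R -> nat) (f : Rpoly) : Prop :=
  forall a, a \in Pi ->
    exists q : Rpoly, f - refl a f = lin a ^+ (2 * mu a + 1) * q.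

Definition Lambda (n : nat) : seq R :=
  [seq (INR k * PI / INR n)%R | k <- iota 0 n].

(* We work in the polynomial ring C[rho, c, s]
   ({mpoly CC[3]}, rho = 'X_0, c = 'X_1 standing for cos(phi),
   s = 'X_2 standing for sin(phi)).  f(rho cos phi, rho sin phi) is the
   substitution z1 := rho c, z2 := rho s. *)
Notation Ppoly := {mpoly CC[3]}.
Definition prho : Ppoly := 'X_(@Ordinal 3 0 isT).
Definition pc : Ppoly := 'X_(@Ordinal 3 1 isT).
Definition ps : Ppoly := 'X_(@Ordinal 3 2 isT).

Definition polar (f : Rpoly) : Ppoly := comp_mpoly [tuple prho * pc; prho * ps] f.

(* d/dphi on C[rho, cos phi, sin phi]: the derivation with
   d rho/dphi = 0, d cos(phi)/dphi = - sin(phi), d sin(phi)/dphi = cos(phi). *)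
Definition dphi (p : Ppoly) : Ppoly :=
  - ps * mderiv (@Ordinal 3 1 isT) p + pc * mderiv (@Ordinal 3 2 isT) p.

(* f^(k)_alpha = d^k f / dphi^k at phi = alpha, an element of C[rho]
   (represented inside C[rho, c, s], depending on rho only). *)
Definition fder (k : nat) (a : R) (f : Rpoly) : Ppoly :=
  comp_mpoly [tuple prho; (cr (cos a))%:MP; (cr (sin a))%:MP] (iter k dphi (polar f)).

(* Hom_C(A, C): C-linear maps A -> C, represented by functions on R,
   considered only on A. *)
Definition is_hom (inA' inC : Rpoly -> Prop) (phi : Rpoly -> Rpoly) : Prop :=
  (forall a, inA' a -> inC (phi a)) /\
  (forall a b, inA' a -> inA' b -> phi (a + b) = phi a + phi b) /\
  (forall c a, inC c -> inA' a -> phi (c * a) = c * phi a).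

(* Main.v *)
Require Import Defs.
From Stdlib Require Import Reals Lra.
From HB Require Import structures.
From mathcomp Require Import all_boot all_order all_algebra.
From mathcomp Require Import Rstruct complex mpoly.
From mathcomp Require Import ring zify.
Import Order.TTheory GRing.Theory Num.Theory.
Local Open Scope ring_scope.

Lemma comp_comp (n k l : nat) (lr : n.-tuple {mpoly CC[k]}) (lq : k.-tuple {mpoly CC[l]}) p :
  comp_mpoly lq (comp_mpoly lr p) = comp_mpoly [tuple comp_mpoly lq (tnth lr i) | i < n] p.
Proof.
elim/mpolyind: p => [|c m p _ _ IH]; first by rewrite !raddf0.
rewrite (comp_mpolyD lr).
rewrite (comp_mpolyD lq).
rewrite (comp_mpolyD [tuple comp_mpoly lq (tnth lr i) | i < n]).
rewrite (comp_mpolyZ _ _ lr) (comp_mpolyZ _ _ lq) (comp_mpolyZ _ _ [tuple comp_mpoly lq (tnth lr i) | i < n]).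
congr (_ *: _ + _); last exact: IH.
rewrite !comp_mpolyX rmorph_prod; apply: eq_bigr => i _.
by rewrite rmorphXn tnth_map tnth_ord_tuple.
Qed.

Lemma cr_add x y : cr (x + y) = cr x + cr y.
Proof. by rewrite /cr; apply/eqP; rewrite eq_complex /= addr0 !eqxx. Qed.
Lemma cr_mul x y : cr (x * y) = cr x * cr y.
Proof. by rewrite /cr; apply/eqP; rewrite eq_complex /= !mulr0 !mul0r subr0 addr0 eqxx /=; exact: eqxx. Qed.
Lemma cr_opp x : cr (- x) = - cr x.
Proof. by rewrite /cr; apply/eqP; rewrite eq_complex /= oppr0 !eqxx. Qed.
Lemma cr1 : cr 1 = 1. Proof. by []. Qed.
Lemma cr0 : cr 0 = 0. Proof. by []. Qed.
Lemma cr_eq0 x : (cr x == 0) = (x == 0).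
Proof. by rewrite /cr eq_complex /= eqxx andbT. Qed.

Lemma sc (a : R) : sin a * sin a + cos a * cos a = 1.
Proof. have := sin2_cos2 a. rewrite /Rsqr. rewrite -!RmultE -RplusE. by []. Qed.
Lemma cos2 (a : R) : cos (2 * a) = cos a * cos a - sin a * sin a.
Proof. have := cos_2a a. rewrite -RminusE -!RmultE. move=> <-. by congr cos. Qed.
Lemma sin2 (a : R) : sin (2 * a) = 2 * sin a * cos a.
Proof. have := sin_2a a. rewrite -!RmultE. move=> ->. by []. Qed.
Lemma sinm (a b : R) : sin (a - b) = sin a * cos b - cos a * sin b.
Proof. have := sin_minus a b. rewrite -RminusE -!RmultE. move=> <-. by rewrite RminusE. Qed.
Lemma scC (a : R) : cr (sin a) * cr (sin a) + cr (cos a) * cr (cos a) = 1.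
Proof. rewrite -!cr_mul -cr_add. exact: (congr1 cr (sc a)). Qed.

Section Refl.
Variable a : R.
Local Notation S := (cr (sin a)).
Local Notation C := (cr (cos a)).

Lemma reflD p q : refl a (p + q) = refl a p + refl a q.
Proof. by rewrite /refl rmorphD. Qed.
Lemma reflB p q : refl a (p - q) = refl a p - refl a q.
Proof. by rewrite /refl rmorphB. Qed.
Lemma reflN p : refl a (- p) = - refl a p.
Proof. by rewrite /refl rmorphN. Qed.
Lemma reflM p q : refl a (p * q) = refl a p * refl a q.
Proof. by rewrite /refl rmorphM. Qed.
Lemma reflX p k : refl a (p ^+ k) = refl a p ^+ k.
Proof. by rewrite /refl rmorphXn. Qed.
Lemma reflC c : refl a c%:MP = c%:MP.
Proof. by rewrite /refl comp_mpolyC. Qed.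
Lemma refl1 : refl a 1 = 1.
Proof. by rewrite /refl rmorph1. Qed.
Lemma cr2 : cr (IZR 2) = 2.
Proof. rewrite /cr; apply/eqP; rewrite eq_complex /= addr0 eqxx /=; exact: eqxx. Qed.
Lemma refl_z1 : refl a z1 = (C * C - S * S)%:MP * z1 + (2 * S * C)%:MP * z2.
Proof.
rewrite /refl /z1 comp_mpolyXU /= cos2 sin2 cr_add cr_opp !cr_mul cr2.
by [].
Qed.
Lemma refl_z2 : refl a z2 = (2 * S * C)%:MP * z1 - (C * C - S * S)%:MP * z2.
Proof.
rewrite /refl /z2 comp_mpolyXU /= cos2 sin2 cr_add cr_opp !cr_mul cr2.
by [].
Qed.
Lemma lin_eq : lin a = (- S)%:MP * z1 + C%:MP * z2.
Proof. by rewrite /lin cr_opp. Qed.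
Lemma refl_lin : refl a (lin a) = - lin a.
Proof.
rewrite lin_eq reflD !reflM !reflC refl_z1 refl_z2.
transitivity (- (((- S) * (S * S + C * C))%:MP * z1 + (C * (S * S + C * C))%:MP * z2)).
  ring.
by rewrite scC !mulr1.
Qed.
End Refl.
Lemma ord2_cases (i : 'I_2) : i = @Ordinal 2 0 isT \/ i = @Ordinal 2 1 isT.
Proof. case: i => [[|[|m]] Hm]; [left|right|]; try exact: val_inj. by []. Qed.

Lemma comp2_ext (k : nat) (lq lq' : 2.-tuple {mpoly CC[k]}) (p : Rpoly) :
  tnth lq (@Ordinal 2 0 isT) = tnth lq' (@Ordinal 2 0 isT) ->
  tnth lq (@Ordinal 2 1 isT) = tnth lq' (@Ordinal 2 1 isT) ->
  comp_mpoly lq p = comp_mpoly lq' p.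
Proof.
move=> h0 h1.
have -> : lq = lq'.
  apply: eq_from_tnth => i.
  by case: (ord2_cases i) => ->.
by [].
Qed.
Lemma XE2 (m : 'X_{1..2}) : 'X_[m] = z1 ^+ m (@Ordinal 2 0 isT) * z2 ^+ m (@Ordinal 2 1 isT) :> Rpoly.
Proof.
rewrite mpolyXE_id !big_ord_recr big_ord0 /= mul1r /z1 /z2.
rewrite (_ : widen_ord _ _ = @Ordinal 2 0 isT); last exact: val_inj.
by rewrite (_ : ord_max = @Ordinal 2 1 isT); last exact: val_inj.
Qed.

Lemma splitD (p : Rpoly) : exists q, p = comp_mpoly [tuple z1; 0] p + z2 * q.
Proof.
elim/mpolyind: p => [|c m p _ _ [q Hq]]; first by exists 0; rewrite raddf0 mulr0 addr0.
rewrite comp_mpolyD comp_mpolyZ XE2 rmorphM !rmorphXn /= /z1 /z2 !comp_mpolyXU /=.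
case E: (m (@Ordinal 2 1 isT)) => [|k].
  exists q; rewrite expr0 !mulr1 {1}Hq addrA. by [].
exists (c *: ('X_(@Ordinal 2 0 isT) ^+ m (@Ordinal 2 0 isT) * 'X_(@Ordinal 2 1 isT) ^+ k) + q).
rewrite expr0n /= mulr0 scaler0 add0r {1}Hq exprS.
rewrite /z1 /z2 -!mul_mpolyC; ring.
Qed.
Definition ev (a : R) (p : Rpoly) : Rpoly :=
  comp_mpoly [tuple (cr (cos a))%:MP * z1; (cr (sin a))%:MP * z1] p.

Section Ev.
Variable a : R.
Local Notation S := (cr (sin a)).
Local Notation C := (cr (cos a)).
Lemma evD p q : ev a (p + q) = ev a p + ev a q. Proof. by rewrite /ev rmorphD. Qed.
Lemma evB p q : ev a (p - q) = ev a p - ev a q. Proof. by rewrite /ev rmorphB. Qed.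
Lemma evN p : ev a (- p) = - ev a p. Proof. by rewrite /ev rmorphN. Qed.
Lemma evM p q : ev a (p * q) = ev a p * ev a q. Proof. by rewrite /ev rmorphM. Qed.
Lemma evX p k : ev a (p ^+ k) = ev a p ^+ k. Proof. by rewrite /ev rmorphXn. Qed.
Lemma evC c : ev a c%:MP = c%:MP. Proof. by rewrite /ev comp_mpolyC. Qed.
Lemma ev0 : ev a 0 = 0. Proof. by rewrite /ev rmorph0. Qed.
Lemma ev_z1 : ev a z1 = C%:MP * z1. Proof. by rewrite /ev /z1 comp_mpolyXU. Qed.
Lemma ev_z2 : ev a z2 = S%:MP * z1. Proof. by rewrite /ev /z2 comp_mpolyXU. Qed.
Lemma ev_lin : ev a (lin a) = 0.
Proof. rewrite lin_eq evD !evM !evC ev_z1 ev_z2. ring. Qed.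
Lemma ev_linb b : ev a (lin b) = (cr (sin (a - b)))%:MP * z1.
Proof. rewrite lin_eq evD !evM !evC ev_z1 ev_z2 sinm cr_add cr_opp !cr_mul. ring. Qed.
Lemma ev_refl p : ev a (refl a p) = ev a p.
Proof.
rewrite /ev /refl comp_comp; apply: comp2_ext; rewrite tnth_map tnth_ord_tuple !(tnth_nth 0) /= -!/(ev a _);
  rewrite ?evD ?evB ?evN !evM !evC ?ev_z1 ?ev_z2 cos2 sin2 cr_add cr_opp !cr_mul cr2.
  transitivity ((C * (S * S + C * C))%:MP * z1); first ring.
  by rewrite scC mulr1.
transitivity ((S * (S * S + C * C))%:MP * z1); first ring.
by rewrite scC mulr1.
Qed.

Lemma ev_kernel h : ev a h = 0 -> exists q, h = lin a * q.
Proof.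
move=> Hh.
pose rt := [tuple C%:MP * z1 - S%:MP * z2; S%:MP * z1 + C%:MP * z2].
pose ut := [tuple C%:MP * z1 + S%:MP * z2; lin a].
have E1 : comp_mpoly ut (comp_mpoly rt h) = h.
  rewrite comp_comp -[RHS]comp_mpoly_id; apply: comp2_ext;
    rewrite !tnth_mktuple !(tnth_nth 0) /= ?comp_mpolyD ?comp_mpolyB ?comp_mpolyN !rmorphM /=
      !comp_mpolyC /z1 /z2 !comp_mpolyXU /= lin_eq /z1 /z2.
    transitivity ((S * S + C * C)%:MP * 'X_(@Ordinal 2 0 isT) : Rpoly); first ring.
    by rewrite scC mul1r.
  transitivity ((S * S + C * C)%:MP * 'X_(@Ordinal 2 1 isT) : Rpoly); first ring.
  by rewrite scC mul1r.
have E2 : comp_mpoly [tuple z1; 0] (comp_mpoly rt h) = 0.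
  rewrite -[RHS]Hh comp_comp /ev; apply: comp2_ext;
    rewrite !tnth_mktuple !(tnth_nth 0) /= ?comp_mpolyD ?comp_mpolyB ?comp_mpolyN !rmorphM /=
      !comp_mpolyC /z1 /z2 !comp_mpolyXU /=; ring.
have [Q HQ] := splitD (comp_mpoly rt h).
rewrite E2 add0r in HQ.
exists (comp_mpoly ut Q).
by rewrite -{1}E1 HQ rmorphM /= /z2 comp_mpolyXU.
Qed.
End Ev.

Lemma Xm_neq0 (k : nat) (m : 'X_{1..k}) : ('X_[m] : {mpoly CC[k]}) != 0.
Proof.
apply/eqP => h; have := @mcoeffX k CC m m; rewrite h mcoeff0 eqxx => /eqP.
by rewrite eq_sym oner_eq0.
Qed.

Lemma mderiv_XU (k : nat) (i j : 'I_k) : mderiv i ('X_j : {mpoly CC[k]}) = (j == i)%:R.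
Proof.
rewrite mderivX mnm1E; case: eqP => [->|_]; last by rewrite scale0r.
rewrite (_ : (U_(i) - U_(i))%MM = 0%MM) ?mpolyX0 ?scale1r //.
by apply/mnmP => l; rewrite mnmBE mnm0E subnn.
Qed.

Lemma dphiD p q : dphi (p + q) = dphi p + dphi q.
Proof. rewrite /dphi !mderivD. ring. Qed.
Lemma dphiM p q : dphi (p * q) = dphi p * q + p * dphi q.
Proof. rewrite /dphi !mderivM. ring. Qed.
Lemma dphiX p n : dphi (p ^+ n.+1) = n.+1%:R * p ^+ n * dphi p.
Proof.
elim: n => [|n IH]; first by rewrite expr1 expr0 mulr1 mul1r.
rewrite exprS dphiM IH exprS. rewrite -!natr1. ring.
Qed.

Lemma dphiC c : dphi c%:MP = 0.
Proof. by rewrite /dphi !mderivC !mulr0 addr0. Qed.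
Lemma dphi_rho : dphi prho = 0.
Proof. by rewrite /dphi /prho !mderiv_XU /= !mulr0 addr0. Qed.
Lemma dphi_c : dphi pc = - ps.
Proof. by rewrite /dphi /pc !mderiv_XU /= mulr0 addr0 mulr1. Qed.
Lemma dphi_s : dphi ps = pc.
Proof. by rewrite /dphi /ps !mderiv_XU /= mulr0 add0r mulr1. Qed.

Lemma iter_inv (L P : Ppoly) (N k : nat) : (k <= N)%N ->
  exists c : nat, exists Q : Ppoly, (0 < c)%N /\
    iter k dphi (L ^+ N * P) = L ^+ (N - k) * (c%:R * dphi L ^+ k * P + L * Q).
Proof.
elim: k => [|k IH] Hk.
  by exists 1%N, 0; rewrite /= subn0 mulr0 addr0 expr0 mulr1 mul1r.
have [c [Q [Hc E]]] := IH (ltnW Hk).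
have HN : (N - k = (N - k.+1).+1)%N by rewrite subnSK.
exists ((N - k.+1).+1 * c)%N,
  ((N - k.+1).+1%:R * dphi L * Q + dphi (c%:R * dphi L ^+ k * P + L * Q)).
split; first by rewrite muln_gt0 Hc.
rewrite iterS E HN dphiM dphiX natrM !exprS.
move: (N - k.+1)%N => j. ring.
Qed.


Lemma top_aux (z x y P q : Ppoly) (c N : nat) : (0 < c)%N -> z = c%:R -> x = 0 -> y = prho ->
  z * y ^+ N * P + x * q = 0 -> P = 0.
Proof.
move=> Hc -> -> ->; rewrite mul0r addr0.
move/eqP; rewrite !mulf_eq0 => /orP [/orP [H|H]|/eqP //].
  move: H; rewrite -(rmorph_nat (@mpolyC 3 CC)) mpolyC_eq0 pnatr_eq0 => /eqP Hc0.
  by rewrite Hc0 in Hc.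
by move: H; rewrite expf_eq0 /prho (negbTE (Xm_neq0 _ _)) andbF.
Qed.
Section Polar.
Variable a : R.
Local Notation S := (cr (sin a)).
Local Notation C := (cr (cos a)).
Definition ev3t : 3.-tuple Ppoly := [tuple prho; C%:MP; S%:MP].

Lemma fderE k f : fder k a f = comp_mpoly ev3t (iter k dphi (polar f)).
Proof. by []. Qed.

Lemma polar_lin : polar (lin a) = (- S)%:MP * (prho * pc) + C%:MP * (prho * ps).
Proof.
rewrite lin_eq /polar rmorphD !rmorphM /= !comp_mpolyC /z1 /z2 !comp_mpolyXU /=.
by [].
Qed.

Lemma ev3_L : comp_mpoly ev3t (polar (lin a)) = 0.
Proof.
rewrite polar_lin rmorphD !rmorphM /= !comp_mpolyC /prho /pc /ps !comp_mpolyXU /=.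
ring.
Qed.

Lemma ev3_dL : comp_mpoly ev3t (dphi (polar (lin a))) = prho.
Proof.
rewrite polar_lin dphiD !dphiM !dphiC dphi_rho dphi_c dphi_s.
rewrite ?mul0r ?mulr0 ?add0r ?addr0.
rewrite (_ : (- S)%:MP * (prho * - ps) + C%:MP * (prho * pc) = (S%:MP * ps + C%:MP * pc) * prho); last by ring.
rewrite rmorphM rmorphD !rmorphM /= !comp_mpolyC /prho /pc /ps !comp_mpolyXU /=.
transitivity ((S * S + C * C)%:MP * prho : Ppoly); first ring.
by rewrite scC mul1r.
Qed.


Lemma ev3M p q : comp_mpoly ev3t (p * q) = comp_mpoly ev3t p * comp_mpoly ev3t q.
Proof. exact: rmorphM. Qed.
Lemma ev3D p q : comp_mpoly ev3t (p + q) = comp_mpoly ev3t p + comp_mpoly ev3t q.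
Proof. exact: rmorphD. Qed.
Lemma ev3X p n : comp_mpoly ev3t (p ^+ n) = comp_mpoly ev3t p ^+ n.
Proof. exact: rmorphXn. Qed.
Lemma ev3n n : comp_mpoly ev3t n%:R = n%:R.
Proof. exact: rmorph_nat. Qed.
Lemma polarM p q : polar (p * q) = polar p * polar q.
Proof. exact: rmorphM. Qed.
Lemma polarX p n : polar (p ^+ n) = polar p ^+ n.
Proof. exact: rmorphXn. Qed.

Lemma fder_low N k h : (k < N)%N -> fder k a (lin a ^+ N * h) = 0.
Proof.
move=> Hk.
rewrite fderE /polar rmorphM rmorphXn /=.
rewrite -/(polar (lin a)) -/(polar h).
have [c [Q [_ E]]] := @iter_inv (polar (lin a)) (polar h) N k (ltnW Hk).
rewrite E.
rewrite ev3M ev3X ev3_L.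
have -> : (N - k)%N = (N - k).-1.+1 by rewrite prednK // subn_gt0.
by rewrite exprS !mul0r.
Qed.

Lemma fder_top N h : fder N a (lin a ^+ N * h) = 0 -> comp_mpoly ev3t (polar h) = 0.
Proof.
rewrite fderE polarM polarX.
have [c [Q [Hc E]]] := @iter_inv (polar (lin a)) (polar h) N N (leqnn N).
rewrite E. rewrite subnn expr0 mul1r. rewrite ev3D !ev3M ev3X.
move=> H; exact: (@top_aux _ _ _ _ _ c N Hc (ev3n c) ev3_L ev3_dL H).
Qed.

Lemma polar_ev h : comp_mpoly [tuple z1; 0; 0] (comp_mpoly ev3t (polar h)) = ev a h.
Proof.
rewrite /polar comp_comp comp_comp /ev; apply: comp2_ext;
  rewrite !tnth_mktuple !(tnth_nth 0) /= !rmorphM /= /prho /pc /ps !comp_mpolyXU -!(tnth_nth 0)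
  !tnth_mktuple !(tnth_nth 0) /= ?comp_mpolyC /z1 !comp_mpolyXU /=; by rewrite mulrC.
Qed.
End Polar.


Opaque ev refl lin comp_mpoly.

Lemma lin_neq0 a : lin a != 0.
Proof.
apply/eqP => H.
have := ev_linb (a + Rdiv PI (IZR (Zpos (xO xH)))) a.
rewrite H ev0 => /esym/eqP.
rewrite mulf_eq0 mpolyC_eq0 cr_eq0 /z1 (negbTE (Xm_neq0 _ _)) orbF.
move=> /eqP Hs.
have : sin (Rdiv PI (IZR (Zpos (xO xH)))) = 0.
  rewrite -Hs; congr sin. by rewrite RminusE RplusE addrAC subrr add0r.
by rewrite sin_PI2 => /eqP; rewrite oner_eq0.
Qed.

Lemma linX_neq0 a k : lin a ^+ k != 0.
Proof. exact: expf_neq0 (lin_neq0 a). Qed.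

Lemma cancel_lin a k (x y : Rpoly) : lin a ^+ k * x = lin a ^+ k * y -> x = y.
Proof. exact: (mulfI (linX_neq0 a k)). Qed.

Lemma refl_linX a k : refl a (lin a ^+ k) = (-1) ^+ k * lin a ^+ k.
Proof. rewrite reflX refl_lin. exact: exprNn. Qed.

Lemma refl_odd a k X : refl a (lin a ^+ k.*2.+1 * X) = - (lin a ^+ k.*2.+1 * refl a X).
Proof.
rewrite reflM refl_linX -signr_odd /= odd_double /= expr1. ring.
Qed.

Lemma refl_even a k X : refl a (lin a ^+ k.*2 * X) = lin a ^+ k.*2 * refl a X.
Proof.
by rewrite reflM refl_linX -signr_odd odd_double expr0 mul1r.
Qed.

Lemma odd_div a k X (p : Rpoly) : p = lin a ^+ k.*2.+1 * X ->
  p - refl a p = lin a ^+ k.*2.+1 * (X + refl a X).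
Proof. move=> ->; rewrite refl_odd. ring. Qed.

Lemma ev_zero_double a (x : Rpoly) : ev a x + ev a x = 0 -> ev a x = 0.
Proof.
move=> H; have : (2%:R : CC)%:MP * ev a x = 0.
  by rewrite -[RHS]H rmorph_nat mulr2n mulrDl mul1r.
by move/eqP; rewrite mulf_eq0 mpolyC_eq0 pnatr_eq0 /= => /eqP.
Qed.

Lemma ev_linS a e (x : Rpoly) : ev a (lin a ^+ e.+1 * x) = 0.
Proof. by rewrite evM evX ev_lin expr0n mul0r. Qed.

Lemma step_odd a (g h q : Rpoly) (j e : nat) :
  g - refl a g = lin a ^+ (j + e.+1) * q -> g = lin a ^+ j * h -> odd j ->
  exists h', h = lin a * h'.
Proof.
move=> Hq Hg Hj.
have Hjk : j = (j./2).*2.+1 by rewrite -{1}(odd_double_half j) Hj add1n.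
have H1 := odd_div a (j./2) h g.
rewrite -Hjk in H1; have H2 := H1 Hg; rewrite Hq exprD -mulrA in H2.
have H3 := cancel_lin _ _ _ _ H2.
have H4 : ev a h + ev a (refl a h) = 0 by rewrite -evD -H3 ev_linS.
rewrite ev_refl in H4.
exact: ev_kernel (ev_zero_double _ _ H4).
Qed.

Lemma step_even a (g h q a0 r q2 : Rpoly) (j k e : nat) :
  g - refl a g = lin a ^+ (j + (k + e.+1)) * q ->
  g = lin a ^+ j * h -> ~~ odd j ->
  a0 - refl a a0 = lin a ^+ k * r ->
  g * a0 - refl a (g * a0) = lin a ^+ (j + (k + e.+1)) * q2 ->
  ev a r != 0 -> exists h', h = lin a * h'.
Proof.
move=> Hq Hg Hj Ha0 Hq2 Hr.
have Hjk : j = (j./2).*2 by rewrite -{1}(odd_double_half j) (negbTE Hj) add0n.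
have Hsg : refl a g = lin a ^+ j * refl a h by rewrite Hg {1}Hjk refl_even -Hjk.
have H1 : h - refl a h = lin a ^+ (k + e.+1) * q.
  apply: (cancel_lin a j); rewrite mulrA -exprD -Hq Hsg Hg; ring.
have H2 : lin a ^+ j * (lin a ^+ k * (h * r + lin a ^+ e.+1 * (q * refl a a0))) =
          lin a ^+ j * (lin a ^+ k * (lin a ^+ e.+1 * q2)).
  have E1 : lin a ^+ j * (lin a ^+ k * (lin a ^+ e.+1 * q2)) = lin a ^+ (j + (k + e.+1)) * q2.
    by rewrite !exprD; ring.
  rewrite E1 -Hq2 reflM Hsg {1}Hg.
  have E2 : refl a a0 = a0 - lin a ^+ k * r by rewrite -Ha0; ring.
  have E3 : refl a h = h - lin a ^+ (k + e.+1) * q by rewrite -H1; ring.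
  rewrite E3 E2 exprD. ring.
have H3 := cancel_lin _ _ _ _ (cancel_lin _ _ _ _ H2).
have H4 : ev a h * ev a r = 0.
  by have := congr1 (ev a) H3; rewrite evD evM !ev_linS addr0.
apply: (ev_kernel a h); apply/eqP.
move/eqP: H4. rewrite mulf_eq0 => /orP [-> //|H].
by case: (negP Hr H).
Qed.

Lemma dvd_induct a (g : Rpoly) (N : nat) :
  (forall j h, (j < N)%N -> g = lin a ^+ j * h -> exists h', h = lin a * h') ->
  exists h, g = lin a ^+ N * h.
Proof.
move=> step.
suff : forall j, (j <= N)%N -> exists h, g = lin a ^+ j * h by apply.
elim => [|j IH] Hj; first by exists g; rewrite expr0 mul1r.
have [h Hh] := IH (ltnW Hj).
have [h' Hh'] := step j h Hj Hh.
by exists h'; rewrite Hh Hh' exprSr mulrA.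
Qed.

Lemma hom_step a (g h q x r : Rpoly) (nu mu m : nat) :
  g = lin a ^+ (2 * nu) * h -> g - refl a g = lin a ^+ (2 * m + 1) * q ->
  x - refl a x = lin a ^+ (2 * mu + 1) * r -> (nu + mu = m)%N ->
  g * x - refl a (g * x) = lin a ^+ (2 * m + 1) * (q * x + refl a h * r).
Proof.
move=> Hg Hq Hx Hm.
have Hsg : refl a g = lin a ^+ (2 * nu) * refl a h by rewrite Hg mul2n refl_even.
have E : (2 * m + 1 = 2 * nu + (2 * mu + 1))%N by rewrite -Hm; lia.
have E2 : refl a x = x - lin a ^+ (2 * mu + 1) * r by rewrite -Hx; ring.
have Hq' : g = lin a ^+ (2 * nu) * refl a h + lin a ^+ (2 * m + 1) * q by rewrite -Hq -Hsg; ring.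
rewrite reflM Hsg E2 Hq' E exprD. ring.
Qed.

Transparent ev refl lin comp_mpoly.


Lemma Lambda_range (n : nat) (x : R) : (0 < n)%N -> x \in Lambda n -> Rle 0 x /\ Rlt x PI.
Proof.
move=> Hn /mapP [k]; rewrite mem_iota add0n => /andP [_ Hk] ->.
have Hn' : (0 < n)%coq_nat by apply/ssrnat.ltP.
have Hk' : (k < n)%coq_nat by apply/ssrnat.ltP.
have hn : Rlt 0 (INR n) by apply: lt_0_INR.
have hk : Rlt (INR k) (INR n) by apply: lt_INR.
have hk0 : Rle 0 (INR k) by apply: pos_INR.
have hpi := PI_RGT_0.
set y := Rinv (INR n).
have hy : Rlt 0 y by apply: Rinv_0_lt_compat.
have hy1 : Rmult (Rmult PI y) (INR n) = PI.
  by rewrite /y Rmult_assoc Rinv_l ?Rmult_1_r //; apply: Rgt_not_eq.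
have hpy : Rlt 0 (Rmult PI y) by apply: Rmult_lt_0_compat.
have p1 := Rmult_le_pos _ _ (Rlt_le _ _ hpy) hk0.
have p2 : Rlt 0 (Rmult (Rmult PI y) (Rminus (INR n) (INR k))).
  by apply: Rmult_lt_0_compat => //; apply: Rlt_Rminus.
have H : Rle 0 (Rmult (Rmult (INR k) PI) y) /\ Rlt (Rmult (Rmult (INR k) PI) y) PI by split; nra.
exact: H.
Qed.

Lemma sin_ne0 (n : nat) (a b : R) : (0 < n)%N -> a \in Lambda n -> b \in Lambda n -> a != b ->
  cr (sin (a - b)) != 0.
Proof.
move=> Hn Ha Hb Hab; rewrite cr_eq0 RminusE.
have [ha1 ha2] := Lambda_range _ _ Hn Ha.
have [hb1 hb2] := Lambda_range _ _ Hn Hb.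
have Hne : a <> b by move/eqP: Hab.
apply/eqP => H0.
have H : sin (Rminus a b) = R0 by exact: H0.
case: (Rtotal_order a b) => [Hlt|[Heq|Hgt]]; last 2 first.
- by apply: Hne.
- have := sin_gt_0 (Rminus a b) ltac:(lra) ltac:(lra). lra.
have := sin_gt_0 (Rminus b a) ltac:(lra) ltac:(lra).
rewrite -Ropp_minus_distr sin_neg H. lra.
Qed.

Lemma prod_lin_split (s : seq R) (P : pred R) K b : b \in s -> P b ->
  \prod_(x <- s | P x) lin x ^+ K = lin b ^+ K * \prod_(x <- rem b s | P x) lin x ^+ K.
Proof. by move=> Hb Pb; rewrite (big_rem b Hb) Pb. Qed.

Lemma ev_prod a (s : seq R) (P : pred R) (F : R -> Rpoly) :
  ev a (\prod_(x <- s | P x) F x) = \prod_(x <- s | P x) ev a (F x).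
Proof. by rewrite /ev rmorph_prod. Qed.

Lemma z1_neq0 : z1 != 0.
Proof. exact: Xm_neq0. Qed.

Lemma evF_neq0 n al K : (0 < n)%N -> al \in Lambda n ->
  ev al (\prod_(b <- Lambda n | b != al) lin b ^+ K) != 0.
Proof.
move=> Hn Hal; rewrite ev_prod prodf_seq_neq0; apply/allP => b Hb; apply/implyP => Hba.
rewrite evX ev_linb; apply: expf_neq0; apply: mulf_neq0; last exact: z1_neq0.
rewrite mpolyC_eq0; apply: (sin_ne0 _ _ _ Hn Hal Hb); by rewrite eq_sym.
Qed.

Lemma Q_neq0 (s : seq R) K : \prod_(b <- s) lin b ^+ K != 0.
Proof. rewrite prodf_seq_neq0; apply/allP => b _; exact: linX_neq0. Qed.

Lemma e2m (m : nat) : (2 * m + 1 = m.*2.+1)%N.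
Proof. by rewrite addn1 mul2n. Qed.

Lemma inC_of_div (s : seq R) m p :
  (forall b, b \in s -> exists X, p = lin b ^+ (2 * m + 1) * X) -> inA s (fun _ => m) p.
Proof.
move=> H b Hb; have [X HX] := H b Hb; exists (X + refl b X).
rewrite e2m in HX *; exact: odd_div HX.
Qed.

Lemma weaken_exp a (mu m : nat) (p X : Rpoly) : (mu <= m)%N ->
  p = lin a ^+ (2 * m + 1) * X -> p = lin a ^+ (2 * mu + 1) * (lin a ^+ (2 * (m - mu)) * X).
Proof.
move=> Hm ->; rewrite mulrA -exprD; congr (_ ^+ _ * _); lia.
Qed.

Lemma odd_div' a k X (p : Rpoly) : p = lin a ^+ (2 * k + 1) * X ->
  p - refl a p = lin a ^+ (2 * k + 1) * (X + refl a X).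
Proof. rewrite e2m; exact: odd_div. Qed.

Lemma a0_props n (mu : R -> nat) m al : (0 < n)%N -> al \in Lambda n ->
  (forall b, b \in Lambda n -> (mu b <= m)%N) ->
  let F := \prod_(b <- Lambda n | b != al) lin b ^+ (2 * m + 1) in
  inA (Lambda n) mu (lin al ^+ (2 * mu al + 1) * F) /\
  lin al ^+ (2 * mu al + 1) * F - refl al (lin al ^+ (2 * mu al + 1) * F)
    = lin al ^+ (2 * mu al + 1) * (F + refl al F) /\
  ev al (F + refl al F) != 0.
Proof.
move=> Hn Hal Hmu F.
have Hdiff : lin al ^+ (2 * mu al + 1) * F - refl al (lin al ^+ (2 * mu al + 1) * F)
    = lin al ^+ (2 * mu al + 1) * (F + refl al F) by exact: odd_div'.
split; [|split].
- move=> b Hb; case: (eqVneq b al) => [->|Hba]; first by exists (F + refl al F).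
  have [X HX] : exists X, lin al ^+ (2 * mu al + 1) * F = lin b ^+ (2 * m + 1) * X.
    exists (lin al ^+ (2 * mu al + 1) *
            \prod_(x <- rem b (Lambda n) | x != al) lin x ^+ (2 * m + 1)).
    rewrite /F (prod_lin_split (Lambda n) (fun x => x != al) (2 * m + 1) b Hb Hba). ring.
  have HX' := weaken_exp b (mu b) m _ X (Hmu b Hb) HX.
  eexists; exact: (odd_div' _ _ _ _ HX').
- exact: Hdiff.
- rewrite evD ev_refl; apply/negP => /eqP H.
  have := evF_neq0 n al (2 * m + 1) Hn Hal; rewrite -/F => /negP; apply.
  by apply/eqP; apply: ev_zero_double.
Qed.


Lemma divM_step (n : nat) (mu : R -> nat) (m : nat) al (g : Rpoly) :
  al \in Lambda n -> (mu al <= m)%N ->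
  inA (Lambda n) (fun _ => m) g ->
  (forall j, (j < m - mu al)%N -> fder (2 * j) al g = 0) ->
  exists h, g = lin al ^+ (2 * (m - mu al)) * h.
Proof.
move=> Hal Hm HC HM.
have [q Hq] := HC al Hal; rewrite /= in Hq.
apply: dvd_induct => j h Hj Hg.
case Hodd: (odd j).
  have E : (2 * m + 1 = j + (2 * m - j).+1)%N by lia.
  rewrite E in Hq.
  exact: (step_odd al g h q j (2 * m - j) Hq Hg Hodd).
have Hjk : (j = 2 * j./2)%N by rewrite mul2n -{1}(odd_double_half j) Hodd add0n.
have Hi : (j./2 < m - mu al)%N by lia.
have H0 : fder j al (lin al ^+ j * h) = 0 by rewrite -Hg {1}Hjk; exact: HM _ Hi.
apply: (ev_kernel al h).
rewrite -polar_ev (fder_top al j h H0).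
exact: rmorph0.
Qed.

Lemma divA_step (n : nat) (mu : R -> nat) (m : nat) al (g : Rpoly) :
  (0 < n)%N -> al \in Lambda n -> (forall b, b \in Lambda n -> (mu b <= m)%N) ->
  inA (Lambda n) (fun _ => m) g ->
  (forall x, inA (Lambda n) mu x -> inA (Lambda n) (fun _ => m) (g * x)) ->
  exists h, g = lin al ^+ (2 * (m - mu al)) * h.
Proof.
move=> Hn Hal Hmu HC HgA.
have [q Hq] := HC al Hal; rewrite /= in Hq.
have [HA0 [Hd Hev]] := a0_props n mu m al Hn Hal Hmu.
move: HA0 Hd Hev.
set F := \prod_(b <- Lambda n | b != al) lin b ^+ (2 * m + 1).
set a0 := lin al ^+ (2 * mu al + 1) * F.
move=> HA0 Hd Hev.
have [q2 Hq2'] := HgA _ HA0 al Hal.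
have Hq2 : g * a0 - refl al (g * a0) = lin al ^+ (2 * m + 1) * q2 := Hq2'.
clear Hq2'.
have Hm := Hmu al Hal.
apply: dvd_induct => j h Hj Hg.
case Hodd: (odd j).
  have E : (2 * m + 1 = j + (2 * m - j).+1)%N by lia.
  rewrite E in Hq.
  exact: (step_odd al g h q j (2 * m - j) Hq Hg Hodd).
have E : (2 * m + 1 = j + ((2 * mu al + 1) + (2 * (m - mu al) - j).-1.+1))%N by lia.
rewrite E in Hq Hq2.
apply: (step_even al g h q a0 (F + refl al F) q2 j (2 * mu al + 1) (2 * (m - mu al) - j).-1 Hq Hg _ Hd Hq2 Hev).
by rewrite Hodd.
Qed.

Lemma hom_M (n : nat) (mu : R -> nat) (m : nat) (g : Rpoly) :
  (forall b, b \in Lambda n -> (mu b <= m)%N) ->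
  inA (Lambda n) (fun _ => m) g ->
  (forall al, al \in Lambda n -> exists h, g = lin al ^+ (2 * (m - mu al)) * h) ->
  forall x, inA (Lambda n) mu x -> inA (Lambda n) (fun _ => m) (g * x).
Proof.
move=> Hmu HC Hdiv x Hx al Hal.
have [q Hq] := HC al Hal; rewrite /= in Hq.
have [h Hh] := Hdiv al Hal.
have [r Hr] := Hx al Hal.
exists (q * x + refl al h * r).
apply: (hom_step al g h q x r (m - mu al) (mu al) m Hh Hq Hr).
by rewrite subnK // Hmu.
Qed.

Lemma Q_in (s : seq R) m y :
  inA s (fun _ => m) ((\prod_(b <- s) lin b ^+ (2 * m + 1)) * y).
Proof.
apply: inC_of_div => b Hb.
exists ((\prod_(x <- rem b s | xpredT x) lin x ^+ (2 * m + 1)) * y).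
rewrite (prod_lin_split s xpredT (2 * m + 1) b Hb isT). ring.
Qed.

Theorem theorem3p10 (n : nat) (mu : R -> nat) :
  (0 < n)%N ->
  let m := (\max_(a <- Lambda n) mu a)%N in
  let inAmu := inA (Lambda n) mu in
  let inC := inA (Lambda n) (fun _ => m) in
  let inM := fun f : Rpoly =>
    inC f /\ forall a, a \in Lambda n ->
      forall j, (j < m - mu a)%N -> fder (2 * j) a f = 0 in
  exists Psi : Rpoly -> Rpoly -> Rpoly,
    (forall g, inM g -> is_hom inAmu inC (Psi g)) /\
    (forall c g h, inC c -> inM g -> inM h ->
       forall a, inAmu a -> Psi (c * g + h) a = c * Psi g a + Psi h a) /\
    (forall g h, inM g -> inM h ->
       (forall a, inAmu a -> Psi g a = Psi h a) -> g = h) /\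
    (forall phi, is_hom inAmu inC phi ->
       exists g, inM g /\ forall a, inAmu a -> phi a = Psi g a).
Proof.
move=> Hn m inAmu inC inM.
have Hmu : forall b, b \in Lambda n -> (mu b <= m)%N.
  by move=> b Hb; rewrite /m; apply: leq_bigmax_seq.
have one_A : inAmu 1.
  by move=> b _; exists 0; rewrite refl1 subrr mulr0.
exists (fun g a => g * a).
split; [|split; [|split]].
- move=> g [HgC HgM]; split; [|split].
  + apply: (hom_M n mu m g Hmu HgC) => al Hal.
    exact: (divM_step n mu m al g Hal (Hmu al Hal) HgC (HgM al Hal)).
  + by move=> a b _ _; rewrite mulrDr.
  + by move=> c a _ _; rewrite mulrCA.
- by move=> c g h _ _ _ a _; rewrite mulrDl mulrA.
- move=> g h _ _ H.
  by have := H 1 one_A; rewrite !mulr1.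
- move=> phi [Hmap [Hadd Hlin]].
  have gC : inC (phi 1) := Hmap 1 one_A.
  have phiE : forall x, inAmu x -> phi x = phi 1 * x.
    move=> x Hx.
    have QC : inC (\prod_(b <- Lambda n) lin b ^+ (2 * m + 1)).
      by have := Q_in (Lambda n) m 1; rewrite mulr1.
    have QxC : inC ((\prod_(b <- Lambda n) lin b ^+ (2 * m + 1)) * x) := Q_in (Lambda n) m x.
    have E1 := Hlin _ x QC Hx.
    have E2 := Hlin _ 1 QxC one_A.
    rewrite mulr1 in E2.
    apply: (mulfI (Q_neq0 (Lambda n) (2 * m + 1))).
    rewrite -E1 E2. ring.
  exists (phi 1); split.
  + split => // al Hal j Hj.
    have [h Hh] : exists h, phi 1 = lin al ^+ (2 * (m - mu al)) * h.
      apply: (divA_step n mu m al (phi 1) Hn Hal Hmu gC) => x Hx.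
      rewrite -(phiE x Hx); exact: (Hmap x Hx).
    rewrite Hh.
    have Hk : ((2 * j)%N < 2 * (m - mu al))%N by lia.
    exact: (fder_low al _ _ h Hk).
  + move=> a Ha; exact: phiE.
Qed.
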